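(* Let $\tau$ be a signature with no function or constant symbols, and let $\varphi$ be a sentence of $\mathcal L_{\omega,\omega}(\tau)$. Let $T_\varphi:=\{\neg\,\vartheta_{\le n}(\varphi): n<\omega\}$, where each $\vartheta_{\le n}(\varphi)$ is taken as a first-order sentence of $\mathcal L_{\omega,\omega}(\tau)$ expressing it; thus $T_\varphi$ is a universal theory expressing that no submodel of size $\le n$, for any $n<\omega$, satisfies $\varphi$. Then the following are equivalent: (i) $\vartheta(\varphi)$ is expressible by a sentence of $\mathcal L_{\omega,\omega}(\tau)$; (ii) there is a $\Sigma^0_2$-sentence $\psi$ of $\mathcal L_{\omega,\omega}(\tau)$ such that $T_\varphi\vDash \varphi\leftrightarrow\psi$.
   Context: Models (structures) are nonempty. A submodel of a $\tau$-model $\mathfrak A$ is a substructure, i.e. a nonempty subset of the universe closed under the interpretations of all function and constant symbols of $\tau$, with the induced structure. $\mathcal L_{\omega,\omega}(\tau)$ is ordinary first-order logic with equality. For a sentence $\varphi$: $\mathfrak A\vDash\vartheta(\varphi)$ iff some submodel of $\mathfrak A$ satisfies $\varphi$. For a cardinal $n$, $\mathfrak A\vDash\vartheta_{\le n}(\varphi)$ iff some submodel of $\mathfrak A$ of cardinality $\le n$ satisfies $\varphi$. A property of $\tau$-models is expressible by a sentence $\chi$ if for every $\tau$-model $\mathfrak A$, $\mathfrak A$ has the property iff $\mathfrak A\vDash\chi$. A $\Sigma^0_2$-sentence is one in prenex form $\exists x_0\ldots\exists x_{k-1}\forall y_0\ldots\forall y_{l-1}\,\psi_0$ with $\psi_0$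 quantifier-free. *)

(* Defs.v *)
From Stdlib Require Import List.
From mathcomp Require Import ssreflect ssrfun ssrbool eqtype ssrnat fintype.




Section FOL.
Variable Rel : Type.
Variable ar : Rel -> nat.

(** Formulas, variables as de Bruijn indices (nat). *)
Inductive form : Type :=
| FFalse : form
| FEq : nat -> nat -> form
| FRel : forall R : Rel, ('I_(ar R) -> nat) -> form
| FNot : form -> form
| FAnd : form -> form -> form
| FOr : form -> form -> form
| FImp : form -> form -> form
| FEx : form -> form
| FAll : form -> form.

Fixpoint closed_at (n : nat) (f : form) : Prop :=
  match f with
  | FFalse => True
  | FEq i j => i < n /\ j < n
  | FRel R a => forall k, a k < n
  | FNot g => closed_at n g
  | FAnd g h | FOr g h | FImp g h => closed_at n g /\ closed_at n h
  | FEx g | FAll g => closed_at n.+1 g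
  end.

Definition sentence (f : form) : Prop := closed_at 0 f.

Fixpoint qfree (f : form) : Prop :=
  match f with
  | FFalse | FEq _ _ | FRel _ _ => True
  | FNot g => qfree g
  | FAnd g h | FOr g h | FImp g h => qfree g /\ qfree h
  | FEx _ | FAll _ => False
  end.

Fixpoint exs (k : nat) (f : form) : form :=
  match k with 0 => f | k'.+1 => FEx (exs k' f) end.
Fixpoint alls (k : nat) (f : form) : form :=
  match k with 0 => f | k'.+1 => FAll (alls k' f) end.

Definition sigma02 (f : form) : Prop :=
  exists k l g, qfree g /\ f = exs k (alls l g).

Record structure : Type := Structure {
  dom :> Type;
  dom_inhabited : inhabited dom;
  interp : forall R : Rel, ('I_(ar R) -> dom) -> Prop
}.

Definition scons {M : Type} (x : M) (e : nat -> M) : nat -> M :=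
  fun n => match n with 0 => x | n'.+1 => e n' end.

Fixpoint sat (M : structure) (e : nat -> dom M) (f : form) : Prop :=
  match f with
  | FFalse => False
  | FEq i j => e i = e j
  | FRel R a => @interp M R (fun k => e (a k))
  | FNot g => ~ sat M e g
  | FAnd g h => sat M e g /\ sat M e h
  | FOr g h => sat M e g \/ sat M e h
  | FImp g h => sat M e g -> sat M e h
  | FEx g => exists x : M, sat M (scons x e) g
  | FAll g => forall x : M, sat M (scons x e) g
  end.

(** M |= f for a sentence f (value independent of the assignment). *)
Definition models (M : structure) (f : form) : Prop :=
  forall e : nat -> M, sat M e f.

(** Submodels: since there are no function/constant symbols, a submodel is
    any nonempty subset of the universe with the induced structure. *)
Definition submodel (M : structure) (A : M -> Prop) (hA : exists x, A x)
  : structure :=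
  {| dom := {x : M | A x};
     dom_inhabited := let (x, Hx) := hA in inhabits (exist A x Hx);
     interp := fun R a => @interp M R (fun k => proj1_sig (a k)) |}.

Definition theta (phi : form) (M : structure) : Prop :=
  exists (A : M -> Prop) (hA : exists x, A x), models (submodel M A hA) phi.

Definition card_le (M : Type) (A : M -> Prop) (n : nat) : Prop :=
  exists l : list M, length l <= n /\ forall x, A x -> In x l.

Definition theta_le (phi : form) (n : nat) (M : structure) : Prop :=
  exists (A : M -> Prop) (hA : exists x, A x),
    card_le M A n /\ models (submodel M A hA) phi.

Definition expressible (P : structure -> Prop) : Prop :=
  exists chi : form, sentence chi /\ forall M, P M <-> models M chi.

Definition model_of_T (phi : form) (M : structure) : Prop :=
  forall n : nat, ~ theta_le phi n M.

End FOL.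
Arguments interp {Rel ar} s R _.
Arguments form {Rel} ar.
Arguments structure {Rel} ar.
Arguments sentence {Rel ar} f.
Arguments sigma02 {Rel ar} f.
Arguments models {Rel ar} M f.
Arguments theta {Rel ar} phi M.
Arguments expressible {Rel ar} P.
Arguments model_of_T {Rel ar} phi M.

(* Main.v *)
Require Import Defs.
From mathcomp Require Import ssreflect ssrfun ssrbool eqtype ssrnat fintype.
From mathcomp Require Import zify.
From Stdlib Require Import List Classical ClassicalEpsilon FunctionalExtensionality
  PropExtensionality ProofIrrelevance.

From mathcomp Require boolp classical_sets filter.

Definition isUF {I : Type} (U : (I -> Prop) -> Prop) : Prop :=
  [/\ U (fun _ => True), ~ U (fun _ => False),
     (forall S T, U S -> U T -> U (fun i => S i /\ T i)),
     (forall S T : I -> Prop, U S -> (forall i, S i -> T i) -> U T)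
   & (forall S, U S \/ U (fun i => ~ S i))].

Module UFM.
Import boolp classical_sets filter.
Lemma uf_exists (I : Type) (D : (I -> Prop) -> Prop) :
 (exists S, D S) ->
 (forall S T, D S -> D T -> exists R, D R /\ forall i, R i -> S i /\ T i) ->
 (forall S, D S -> exists i, S i) ->
 exists U, isUF U /\ forall S, D S -> U S.
Proof.
move=> hne hI hN.
have FF : Filter (filter_from D id).
  apply: filter_from_filter => //.
  move=> i j Di Dj; have [k [Dk Hk]] := hI _ _ Di Dj; exists k => //.
  all: try by move=> x /Hk [? ?]; split.
have PF : ProperFilter (filter_from D id).
  apply: filter_from_proper => i Di; have [x Hx] := hN _ Di; by exists x.
have [G [UG sub]] := ultraFilterLemma PF.
exists G; split; last first.
  move=> S DS; apply: sub; exists S => //.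
have GF : ProperFilter G := ultra_proper.
split.
- by apply: filterS (@filterT _ G _).
- move=> H; apply: (@filter_not_empty _ G _); by apply: filterS H.
- move=> S T HS HT; by apply: filterS (filterI HS HT) => x [].
- move=> S T HS HST; apply: filterS HS; move=> x; exact: HST.
- move=> S; have [h|h] := in_ultra_setVsetC S UG; [left|right] => //.
Qed.
End UFM.

Arguments FFalse {Rel ar}. Arguments FEq {Rel ar}. Arguments FRel {Rel ar}.
Arguments FNot {Rel ar}. Arguments FAnd {Rel ar}. Arguments FOr {Rel ar}.
Arguments FImp {Rel ar}. Arguments FEx {Rel ar}. Arguments FAll {Rel ar}.
Arguments sat {Rel ar}. Arguments closed_at {Rel ar}. Arguments qfree {Rel ar}.
Arguments exs {Rel ar}. Arguments alls {Rel ar}. Arguments submodel {Rel ar}.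
Arguments theta_le {Rel ar}. Arguments dom_inhabited {Rel ar}.
Arguments Structure {Rel ar}.

Lemma sig_eq (A : Type) (P : A -> Prop) (x y : {a | P a}) :
  proj1_sig x = proj1_sig y -> x = y.
Proof. case: x => a p; case: y => b q /= E; subst b; f_equal; apply: proof_irrelevance. Qed.

Definition appe {M : Type} (N : nat) (g e : nat -> M) : nat -> M :=
  fun n => if n < N then g n else e (n - N).

Section F.
Variable Rel : Type.
Variable ar : Rel -> nat.
Notation form := (form ar).
Notation structure := (structure ar).

Definition pt (M : structure) : M := epsilon (dom_inhabited M) (fun _ => True).

Lemma sat_ext (M : structure) (f : form) : forall d (e e' : nat -> M),
  closed_at d f -> (forall k, k < d -> e k = e' k) -> (sat M e f <-> sat M e' f).
Proof.
elim: f => [|i j|R a|g IH|g IHg h IHh|g IHg h IHh|g IHg h IHh|g IH|g IH] d e e' /= C A.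
- done.
- by case: C => Ci Cj; rewrite (A _ Ci) (A _ Cj).
- have -> : (fun k => e (a k)) = (fun k => e' (a k)) by apply: functional_extensionality => k; apply: A.
  done.
- by rewrite (IH d e e').
- by case: C => C1 C2; rewrite (IHg d e e') // (IHh d e e').
- by case: C => C1 C2; rewrite (IHg d e e') // (IHh d e e').
- by case: C => C1 C2; rewrite (IHg d e e') // (IHh d e e').
- split => -[x Hx]; exists x; move: Hx; apply (IH d.+1) => // -[|k] //= Hk; by [apply: A; lia | symmetry; apply: A; lia].
- split => Hx x; move: (Hx x); apply (IH d.+1) => // -[|k] //= Hk; by [apply: A; lia | symmetry; apply: A; lia].
Qed.

Lemma models_of_sat (M : structure) (f : form) e :
  sentence f -> sat M e f -> models M f.
Proof. move=> S H e'; by apply/(sat_ext M f 0 e' e S). Qed.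

Lemma sat_iso (M N : structure) (h : M -> N) :
  (forall x y, h x = h y -> x = y) -> (forall y, exists x, h x = y) ->
  (forall R a, interp M R a <-> interp N R (fun k => h (a k))) ->
  forall f e, sat M e f <-> sat N (fun n => h (e n)) f.
Proof.
move=> hi hs hr; elim => [|i j|R a|g IH|g IHg k IHk|g IHg k IHk|g IHg k IHk|g IH|g IH] e /=.
- done.
- by split => [->|/hi].
- exact: (hr R (fun k => e (a k))).
- by rewrite IH.
- by rewrite IHg IHk.
- by rewrite IHg IHk.
- by rewrite IHg IHk.
- have E : forall x, (fun n => h (scons x e n)) = scons (h x) (fun n => h (e n)).
    by move=> x; apply: functional_extensionality => -[|n].
  split => -[x Hx].
  + by exists (h x); rewrite -E -IH.
  + have [x' Hx'] := hs x; subst x; exists x'; by rewrite IH E.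
- have E : forall x, (fun n => h (scons x e n)) = scons (h x) (fun n => h (e n)).
    by move=> x; apply: functional_extensionality => -[|n].
  split => Hx x.
  + have [x' Hx'] := hs x; subst x; by rewrite -E -IH.
  + by rewrite IH E.
Qed.

Lemma sat_embed (M N : structure) (h : M -> N) :
  (forall x y, h x = h y -> x = y) ->
  (forall R a, interp M R a <-> interp N R (fun k => h (a k))) ->
  forall f e, qfree f -> (sat M e f <-> sat N (fun n => h (e n)) f).
Proof.
move=> hi hr; elim => [|i j|R a|g IH|g IHg k IHk|g IHg k IHk|g IHg k IHk|g IH|g IH] e //= Q.
- by split => [->|/hi].
- by rewrite IH.
- by case: Q => ??; rewrite IHg // IHk.
- by case: Q => ??; rewrite IHg // IHk.
- by case: Q => ??; rewrite IHg // IHk.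
Qed.

Lemma models_iso (M N : structure) (h : M -> N) :
  (forall x y, h x = h y -> x = y) -> (forall y, exists x, h x = y) ->
  (forall R a, interp M R a <-> interp N R (fun k => h (a k))) ->
  forall f, models M f -> models N f.
Proof.
move=> hi hs hr f H e'.
pose e n := proj1_sig (constructive_indefinite_description _ (hs (e' n))).
have -> : e' = (fun n => h (e n)).
  apply: functional_extensionality => n; rewrite /e.
  by case: (constructive_indefinite_description _ _).
by rewrite -(sat_iso _ _ _ hi hs hr).
Qed.

Lemma proj_inj (M : structure) A hA (x y : submodel M A hA) :
  proj1_sig x = proj1_sig y -> x = y.
Proof. exact: sig_eq. Qed.

Lemma sat_sub_qf (M : structure) A hA f (e : nat -> submodel M A hA) :
  qfree f -> (sat (submodel M A hA) e f <-> sat M (fun n => proj1_sig (e n)) f).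
Proof.
apply: (sat_embed _ _ (fun x : submodel M A hA => proj1_sig x)).
- exact: proj_inj.
- by move=> R a.
Qed.


Lemma appe_S {M : Type} N (g e : nat -> M) x :
  appe N g (scons x e) = appe N.+1 (fun n => if n < N then g n else x) e.
Proof.
apply: functional_extensionality => n; rewrite /appe.
case: (ltngtP n N) => H.
- by have -> : (n < N.+1) = true by lia.
- have -> : (n < N.+1) = false by lia.
  by have -> : n - N = (n - N.+1).+1 by lia.
- subst n; have -> : (N < N.+1) = true by lia.
  by rewrite subnn.
Qed.

Lemma appe_ext {M : Type} N (g g' e : nat -> M) :
  (forall n, n < N -> g n = g' n) -> appe N g e = appe N g' e.
Proof.
move=> H; apply: functional_extensionality => n; rewrite /appe.
by case: ifP => // /H ->.
Qed.

Lemma appe0 {M : Type} (g e : nat -> M) : appe 0 g e = e.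
Proof. apply: functional_extensionality => n; by rewrite /appe subn0. Qed.

Lemma exs_sat (M : structure) N : forall (e : nat -> M) f,
  sat M e (exs N f) <-> exists g, sat M (appe N g e) f.
Proof.
elim: N => [|N IH] e f /=.
- split; [by exists e; rewrite appe0 | by case=> g; rewrite appe0].
- split.
  + move=> [x /IH [g Hg]]; rewrite appe_S in Hg; by eexists; exact: Hg.
  + move=> [g Hg]; exists (g N); apply/IH; exists g; rewrite appe_S.
    rewrite (@appe_ext _ N.+1 _ g) // => n Hn; case: ifP => // /negbT H.
    by have -> : n = N by lia.
Qed.

Lemma alls_sat (M : structure) N : forall (e : nat -> M) f,
  sat M e (alls N f) <-> forall g, sat M (appe N g e) f.
Proof.
elim: N => [|N IH] e f /=.
- split; [by move=> H g; rewrite appe0 | by move=> /(_ e); rewrite appe0].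
- split.
  + move=> H g; move: (H (g N)) => /IH /(_ g); rewrite appe_S.
    rewrite (@appe_ext _ N.+1 _ g) // => n Hn; case: ifP => // /negbT H'.
    by have -> : n = N by lia.
  + move=> H x; apply/IH => g; rewrite appe_S; exact: H.
Qed.

Lemma closed_exs N : forall d (f : form), closed_at d (exs N f) <-> closed_at (d + N) f.
Proof. elim: N => [|N IH] d f /=; first by rewrite addn0. by rewrite IH addSnnS. Qed.

Lemma closed_alls N : forall d (f : form), closed_at d (alls N f) <-> closed_at (d + N) f.
Proof. elim: N => [|N IH] d f /=; first by rewrite addn0. by rewrite IH addSnnS. Qed.

Fixpoint memf (N D : nat) : form :=
  match N with 0 => FFalse | S j => FOr (memf j D) (FEq 0 (D + j)) end.

Lemma memf_sat (M : structure) (e : nat -> M) N D :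
  sat M e (memf N D) <-> exists j, j < N /\ e 0 = e (D + j).
Proof.
elim: N => [|N IH] /=; first by split => // -[j []].
rewrite IH; split.
- move=> [[j [Hj E]]|E]; [exists j; split => //; lia | exists N; split => //].
- move=> [j [Hj E]]; have [H|H] : j < N \/ j = N by lia.
  + left; by exists j.
  + by right; subst j.
Qed.

Lemma closed_memf N D m : 0 < m -> D + N <= m -> closed_at m (memf N D).
Proof. elim: N => [|N IH] //= H1 H2; split; [apply: IH => //; lia | split => //; lia]. Qed.

Fixpoint rel (N d : nat) (f : form) : form :=
  match f with
  | FFalse => FFalse
  | FEq i j => FEq i j
  | FRel R a => FRel R a
  | FNot g => FNot (rel N d g)
  | FAnd g h => FAnd (rel N d g) (rel N d h)
  | FOr g h => FOr (rel N d g) (rel N d h)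
  | FImp g h => FImp (rel N d g) (rel N d h)
  | FEx g => FEx (FAnd (memf N d.+1) (rel N d.+1 g))
  | FAll g => FAll (FImp (memf N d.+1) (rel N d.+1 g))
  end.

Lemma closed_rel N (f : form) : forall d, closed_at d f -> closed_at (d + N) (rel N d f).
Proof.
elim: f => [|i j|R a|g IH|g IHg h IHh|g IHg h IHh|g IHg h IHh|g IH|g IH] d //=.
- move=> [??]; split; lia.
- move=> H k; move: (H k); lia.
- exact: IH.
- by move=> [??]; split; [apply: IHg|apply: IHh].
- by move=> [??]; split; [apply: IHg|apply: IHh].
- by move=> [??]; split; [apply: IHg|apply: IHh].
- move=> H; split; first by apply: closed_memf; lia.
  by rewrite -addSn; apply: IH.
- move=> H; split; first by apply: closed_memf; lia.
  by rewrite -addSn; apply: IH.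
Qed.

Lemma rel_sat (M : structure) N (f : form) : forall d (e : nat -> M) A hA
  (e' : nat -> submodel M A hA),
  closed_at d f -> (forall x, A x <-> exists j, j < N /\ x = e (d + j)) ->
  (forall k, k < d -> proj1_sig (e' k) = e k) ->
  (sat M e (rel N d f) <-> sat (submodel M A hA) e' f).
Proof.
elim: f => [|i j|R a|g IH|g IHg h IHh|g IHg h IHh|g IHg h IHh|g IH|g IH] d e A hA e' /= C HA Ag.
- done.
- case: C => Ci Cj; rewrite -(Ag _ Ci) -(Ag _ Cj); split; [exact: proj_inj | by move=> ->].
- have -> : (fun k => e (a k)) = (fun k => proj1_sig (e' (a k))).
    by apply: functional_extensionality => k; rewrite Ag.
  done.
- by rewrite (IH d e A hA e').
- by case: C => C1 C2; rewrite (IHg d e A hA e') // (IHh d e A hA e').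
- by case: C => C1 C2; rewrite (IHg d e A hA e') // (IHh d e A hA e').
- by case: C => C1 C2; rewrite (IHg d e A hA e') // (IHh d e A hA e').
- have HA' : forall x y, A y <-> exists j, j < N /\ y = scons x e (d.+1 + j).
    by move=> x y; rewrite HA; setoid_rewrite addSn.
  have Ag' : forall x (y : submodel M A hA), proj1_sig y = x ->
     forall k, k < d.+1 -> proj1_sig (scons y e' k) = scons x e k.
    by move=> x y Hy [|k] //= Hk; apply: Ag; lia.
  split.
  + move=> [x [/memf_sat Hm Hr]].
    have Ax : A x by apply/HA; move: Hm => [j [Hj E]]; exists j; split => //; rewrite E addSn.
    exists (exist _ x Ax).
    by apply (IH d.+1 (scons x e) A hA _ C (HA' x) (Ag' x (exist _ x Ax) erefl)).
  + move=> [y Hy]; exists (proj1_sig y); split.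
    * apply/memf_sat; have := proj2_sig y => /HA [j [Hj E]]; exists j; split => //.
    * by apply (IH d.+1 (scons (proj1_sig y) e) A hA _ C (HA' _) (Ag' _ y erefl)).
- have HA' : forall x y, A y <-> exists j, j < N /\ y = scons x e (d.+1 + j).
    by move=> x y; rewrite HA; setoid_rewrite addSn.
  have Ag' : forall x (y : submodel M A hA), proj1_sig y = x ->
     forall k, k < d.+1 -> proj1_sig (scons y e' k) = scons x e k.
    by move=> x y Hy [|k] //= Hk; apply: Ag; lia.
  split.
  + move=> H y.
    apply (IH d.+1 (scons (proj1_sig y) e) A hA _ C (HA' _) (Ag' _ y erefl)).
    apply: H; apply/memf_sat; have := proj2_sig y => /HA [j [Hj E]]; exists j; split => //.
  + move=> H x /memf_sat Hm.
    have Ax : A x by apply/HA; move: Hm => [j [Hj E]]; exists j; split => //; rewrite E addSn.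
    by apply (IH d.+1 (scons x e) A hA _ C (HA' x) (Ag' x (exist _ x Ax) erefl)).
Qed.


Definition thetaF N (phi : form) : form := exs N (rel N 0 phi).

Lemma thetaF_sentence N phi : sentence phi -> sentence (thetaF N phi).
Proof. move=> S; rewrite /sentence /thetaF closed_exs; exact: (closed_rel N phi 0). Qed.

Lemma thetaF_sat (M : structure) N phi e : sentence phi -> 0 < N ->
  (sat M e (thetaF N phi) <-> theta_le phi N M).
Proof.
move=> S HN; split.
- move/exs_sat => [g Hg].
  pose A := fun x => exists j, j < N /\ x = appe N g e (0 + j).
  have hA : exists x, A x by exists (appe N g e 0), 0.
  exists A, hA; split.
  + exists (List.map (fun j => appe N g e j) (List.seq 0 N)); split.
    * by rewrite length_map length_seq.
    * move=> x [j [Hj ->]]; apply/in_map_iff; exists j; split; first by rewrite add0n.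
      apply/in_seq; lia.
  + move=> e'; apply (rel_sat M N phi 0 (appe N g e) A hA e' S) => //.
- move=> [A [hA [[l [Hl Hc]] Hm]]].
  have [x0 Hx0] := constructive_indefinite_description _ hA.
  pose g j := if excluded_middle_informative ((j < length l)%coq_nat /\ A (nth j l x0))
              then nth j l x0 else x0.
  have Hg : forall j, A (g j).
    by move=> j; rewrite /g; case: excluded_middle_informative => // -[].
  apply/exs_sat; exists g.
  have HA : forall x, A x <-> exists j, j < N /\ x = appe N g e (0 + j).
    move=> x; split.
    + move=> Ax; have [j [Hj E]] := In_nth l x x0 (Hc x Ax).
      exists j; split; first by lia.
      rewrite add0n /appe; have -> : (j < N) = true by lia.
      rewrite /g; case: excluded_middle_informative => // -[]; split => //.
      by rewrite E.
    + move=> [j [Hj ->]]; rewrite add0n /appe; have -> : (j < N) = true by lia.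
      exact: Hg.
  by apply (rel_sat M N phi 0 (appe N g e) A hA (fun _ => exist _ x0 Hx0) S HA).
Qed.

Lemma theta_le_mono phi n m (M : structure) : n <= m -> theta_le phi n M -> theta_le phi m M.
Proof.
move=> Hnm [A [hA [[l [Hl Hc]] Hm]]]; exists A, hA; split => //.
exists l; split => //; exact: leq_trans Hl Hnm.
Qed.

Definition A3 (M : structure) (A : M -> Prop) hA (A2 : submodel M A hA -> Prop) : M -> Prop :=
  fun x => exists p : A x, A2 (exist _ x p).

Lemma sub_sub (M : structure) A hA A2 hA2 f :
  models (submodel (submodel M A hA) A2 hA2) f ->
  exists hA3, models (submodel M (@A3 M A hA A2) hA3) f.
Proof.
move=> H.
have hA3 : exists x, @A3 M A hA A2 x.
  by have [[x p] q] := hA2; exists x, p.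
exists hA3.
have h : forall s : submodel (submodel M A hA) A2 hA2,
   {y : submodel M (@A3 M A hA A2) hA3 | proj1_sig y = proj1_sig (proj1_sig s)}.
  by move=> [[x p] q]; exists (exist _ x (ex_intro _ p q)).
pose hh s := proj1_sig (h s).
have Hh : forall s, proj1_sig (hh s) = proj1_sig (proj1_sig s).
  by move=> s; rewrite /hh; case: (h s).
apply: (models_iso _ _ hh) H.
- move=> s s' E; have := f_equal (@proj1_sig _ _) E; rewrite !Hh => E'.
  by apply: sig_eq; apply: sig_eq.
- move=> [x [p q]]; exists (exist _ (exist _ x p) q); apply: sig_eq; by rewrite Hh.
- move=> R a /=.
  have -> : (fun k => proj1_sig (hh (a k))) = (fun k => proj1_sig (proj1_sig (a k))).
    by apply: functional_extensionality => k; rewrite Hh.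
  done.
Qed.

Lemma theta_le_sub phi n (M : structure) A hA :
  theta_le phi n (submodel M A hA) -> theta_le phi n M.
Proof.
move=> [A2 [hA2 [[l [Hl Hc]] Hm]]]; have [hA3 Hm3] := sub_sub _ _ _ _ _ _ Hm.
exists (@A3 M A hA A2), hA3; split => //.
exists (List.map (@proj1_sig _ _) l); split; first by rewrite length_map.
move=> x [p q]; exact: (in_map (@proj1_sig _ _) l (exist _ x p) (Hc _ q)).
Qed.

Lemma theta_sub_card phi n (M : structure) A hA :
  theta phi (submodel M A hA) -> card_le M A n -> theta_le phi n M.
Proof.
move=> [A2 [hA2 Hm]] [l [Hl Hc]]; have [hA3 Hm3] := sub_sub _ _ _ _ _ _ Hm.
exists (@A3 M A hA A2), hA3; split => //.
exists l; split => // x [p q]; exact: Hc.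
Qed.

Section Ultra.
Variables (I : Type) (U : (I -> Prop) -> Prop) (HU : isUF U) (Ms : I -> structure).

Lemma uT : U (fun _ => True). Proof. by case: HU. Qed.
Lemma uF : ~ U (fun _ => False). Proof. by case: HU. Qed.
Lemma uI {S T} : U S -> U T -> U (fun i => S i /\ T i). Proof. case: HU => _ _ H _ _; exact: H. Qed.
Lemma uM {S T : I -> Prop} : U S -> (forall i, S i -> T i) -> U T.
Proof. case: HU => _ _ _ H _; exact: H. Qed.
Lemma uU S : U S \/ U (fun i => ~ S i). Proof. case: HU => _ _ _ _ H; exact: H. Qed.
Lemma uEx {S} : U S -> exists i, S i.
Proof. move=> H; apply: NNPP => N; apply: uF; apply: (uM H) => i Si; apply: N; by exists i. Qed.
Lemma uConst (P : Prop) : U (fun _ => P) <-> P.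
Proof. split; [by move/uEx => [] | move=> p; apply: (uM uT) => i _; exact: p]. Qed.
Lemma uNot S : U (fun i => ~ S i) <-> ~ U S.
Proof.
split.
- move=> H H'; apply: uF; apply: (uM (uI H H')) => i [A B]; exact: A B.
- by case: (uU S).
Qed.

Lemma fin_inter_nat n (S : nat -> I -> Prop) :
  (forall m, m < n -> U (S m)) -> U (fun i => forall m, m < n -> S m i).
Proof.
elim: n => [|n IH] H.
- by apply: (uM uT) => i _ m.
- have H1 := IH (fun m Hm => H m (ltnW Hm)).
  apply: (uM (uI H1 (H n (ltnSn n)))) => i [A B] m Hm.
  have [Hm'|->] : m < n \/ m = n by lia.
  + exact: A.
  + exact: B.
Qed.

Lemma fin_inter n (S : 'I_n -> I -> Prop) :
  (forall k, U (S k)) -> U (fun i => forall k, S k i).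
Proof.
move=> H.
have H2 : U (fun i => forall m, m < n -> forall k : 'I_n, nat_of_ord k = m -> S k i).
  apply: fin_inter_nat => m Hm; apply: (uM (H (Ordinal Hm))) => i Hi k Hk.
  by have -> : k = Ordinal Hm by apply: val_inj.
apply: (uM H2) => i Hi k; exact: (Hi k (ltn_ord k) k erefl).
Qed.

Definition Pr := forall i, Ms i.
Definition equiv (f g : Pr) := U (fun i => f i = g i).
Definition Q := {P : Pr -> Prop | exists f, P = equiv f}.
Definition cls (f : Pr) : Q := exist _ (equiv f) (ex_intro _ f erefl).
Definition rep (q : Q) : Pr := proj1_sig (constructive_indefinite_description _ (proj2_sig q)).
Lemma rep_spec q : proj1_sig q = equiv (rep q).
Proof. rewrite /rep; by case: (constructive_indefinite_description _ _). Qed.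

Lemma equiv_refl f : equiv f f. Proof. by apply: (uM uT). Qed.
Lemma equiv_sym {f g} : equiv f g -> equiv g f. Proof. move=> H; by apply: (uM H). Qed.
Lemma equiv_trans {f g h} : equiv f g -> equiv g h -> equiv f h.
Proof. move=> H1 H2; apply: (uM (uI H1 H2)) => i [-> ->]. done. Qed.

Lemma cls_eq f g : cls f = cls g <-> equiv f g.
Proof.
split.
- move=> E; have := f_equal (fun q => proj1_sig q g) E => /= ->; exact: equiv_refl.
- move=> H; apply: sig_eq => /=; apply: functional_extensionality => h.
  apply: propositional_extensionality; split => H'.
  + exact: (equiv_trans (equiv_sym H) H').
  + exact: (equiv_trans H H').
Qed.

Lemma cls_rep q : cls (rep q) = q.
Proof. apply: sig_eq => /=; by rewrite -rep_spec. Qed.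

Lemma rep_cls f : equiv (rep (cls f)) f.
Proof. apply/cls_eq; exact: cls_rep. Qed.

Definition pointP : Pr := fun i => pt (Ms i).

Definition UP : structure :=
  Structure Q (inhabits (cls pointP))
    (fun R a => U (fun i => interp (Ms i) R (fun k => rep (a k) i))).

Lemma interp_cls n (b : 'I_n -> Pr) (P : forall i, ('I_n -> Ms i) -> Prop) :
  U (fun i => P i (fun k => rep (cls (b k)) i)) <-> U (fun i => P i (fun k => b k i)).
Proof.
have H : U (fun i => forall k, rep (cls (b k)) i = b k i).
  apply: fin_inter => k; exact: rep_cls.
split => H'; apply: (uM (uI H H')) => i [E p].
- by rewrite -(functional_extensionality _ _ E).
- by rewrite (functional_extensionality _ _ E).
Qed.

Lemma los (f : form) : forall E : forall i, nat -> Ms i,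
  sat UP (fun n => cls (fun i => E i n)) f <-> U (fun i => sat (Ms i) (E i) f).
Proof.
elim: f => [|x y|R a|g IH|g IHg h IHh|g IHg h IHh|g IHg h IHh|g IH|g IH] E /=.
- split => //; exact: uF.
- exact: cls_eq.
- exact (interp_cls _ (fun k j => E j (a k)) (fun i => interp (Ms i) R)).
- by rewrite IH uNot.
- rewrite IHg IHh; split.
  + by move=> [A B]; apply: uI.
  + by move=> H; split; apply: (uM H) => i [].
- rewrite IHg IHh; split.
  + by move=> [A|B]; [apply: (uM A) => i; left | apply: (uM B) => i; right].
  + move=> H; case: (uU (fun i => sat (Ms i) (E i) g)) => [A|A]; first by left.
    case: (uU (fun i => sat (Ms i) (E i) h)) => [B|B]; first by right.
    exfalso; apply: uF; apply: (uM (uI H (uI A B))) => i [[?|?] [? ?]]; auto.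
- rewrite IHg IHh; split.
  + move=> H; case: (uU (fun i => sat (Ms i) (E i) g)) => [A|A].
    * by apply: (uM (H A)) => i ? ?.
    * by apply: (uM A) => i ? ?.
  + move=> H A; by apply: (uM (uI H A)) => i [? ?]; auto.
- have Es : forall w : Pr, scons (cls w) (fun n => cls (fun i => E i n)) =
      (fun n => cls (fun i => scons (w i) (E i) n)).
    by move=> w; apply: functional_extensionality => -[|n].
  split.
  + move=> [q Hq]; rewrite -(cls_rep q) Es IH in Hq.
    by apply: (uM Hq) => i H; exists (rep q i).
  + move=> H.
    pose w i := match excluded_middle_informative (exists x, sat (Ms i) (scons x (E i)) g) with
                | left h => proj1_sig (constructive_indefinite_description _ h)
                | right _ => pt (Ms i) end.
    have Hw : forall i, (exists x, sat (Ms i) (scons x (E i)) g) -> sat (Ms i) (scons (w i) (E i)) g.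
      move=> i h; rewrite /w; case: excluded_middle_informative => // h'.
      by case: (constructive_indefinite_description _ _).
    exists (cls w); rewrite Es IH; exact: uM H Hw.
- have Es : forall w : Pr, scons (cls w) (fun n => cls (fun i => E i n)) =
      (fun n => cls (fun i => scons (w i) (E i) n)).
    by move=> w; apply: functional_extensionality => -[|n].
  split.
  + move=> H; case: (uU (fun i => forall x, sat (Ms i) (scons x (E i)) g)) => // HN.
    exfalso.
    pose w i := match excluded_middle_informative (exists x, ~ sat (Ms i) (scons x (E i)) g) with
                | left h => proj1_sig (constructive_indefinite_description _ h)
                | right _ => pt (Ms i) end.
    have Hw : forall i, ~ (forall x, sat (Ms i) (scons x (E i)) g) -> ~ sat (Ms i) (scons (w i) (E i)) g.
      move=> i h; rewrite /w; case: excluded_middle_informative => h'.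
      * by case: (constructive_indefinite_description _ _).
      * exfalso; apply: h => x; apply: NNPP => hx; apply: h'; by exists x.
    have := H (cls w); rewrite Es IH => Hs.
    apply: uF; apply: (uM (uI Hs HN)) => i [A B]; exact: (Hw i B A).
  + move=> H q; rewrite -(cls_rep q) Es IH; by apply: (uM H) => i h.
Qed.

Lemma env_cls (e : nat -> Q) : e = fun n => cls (fun i => rep (e n) i).
Proof. apply: functional_extensionality => n; by rewrite cls_rep. Qed.

End Ultra.


Lemma sigma_noT phi psi : sentence phi -> sentence psi -> sigma02 psi ->
  (forall M : structure, model_of_T phi M -> (models M phi <-> models M psi)) ->
  forall M : structure, model_of_T phi M -> ~ models M phi.
Proof.
move=> Sphi Spsi [k [l [g [Qg Epsi]]]] H M TM Mphi.
have Mpsi := (H M TM).1 Mphi.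
move: (Mpsi (fun _ => pt M)); rewrite Epsi => /exs_sat [w /alls_sat Hw].
pose w' j := if j < k then w j else pt M.
pose A x := x = pt M \/ exists j, x = w' j.
have hA : exists x, A x by exists (pt M); left.
pose C := submodel M A hA.
have TC : model_of_T phi C.
  move=> n Hn; apply: (TM n); exact: (theta_le_sub _ _ _ _ _ Hn).
have Cpsi : models C psi.
  pose W j : C := exist _ (w' j) (or_intror (ex_intro _ j erefl)).
  pose E0 : nat -> C := fun _ => exist _ (pt M) (or_introl erefl).
  apply: (models_of_sat _ _ E0 Spsi); rewrite Epsi.
  apply/exs_sat; exists W; apply/alls_sat => y.
  apply/sat_sub_qf => //.
  have Cg : closed_at (0 + k + l) g.
    by move: Spsi; rewrite Epsi /sentence closed_exs closed_alls.
  apply: ((sat_ext M g (0 + k + l) (appe l (fun n => proj1_sig (y n)) (appe k w (fun _ => pt M))) _ Cg _).1 (Hw _)).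
  move=> n Hn; rewrite /appe; case: ifP => // Hl.
  case: ifP => Hk; first by rewrite /= /w' Hk.
  lia.
have Cphi : models C phi := (H C TC).2 Cpsi.
apply: (TM k.+1); exists A, hA; split => //.
exists (pt M :: List.map w' (List.seq 0 k)); split.
- by rewrite /= length_map length_seq.
- move=> x [->|[j ->]]; first by left.
  case Hj: (j < k).
  + right; apply/in_map_iff; exists j; split => //; apply/in_seq; lia.
  + by left; rewrite /w' Hj.
Qed.

Lemma expr_noT phi : sentence phi -> expressible (theta phi) ->
  forall M : structure, model_of_T phi M -> ~ models M phi.
Proof.
move=> Sphi [chi [Schi Hchi]] M TM Mphi.
pose x0 := pt M.
pose Al (l : list M) x := x = x0 \/ In x l.
have hAl : forall l, exists x, Al l x by move=> l; exists x0; left.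
pose Ms l := submodel M (Al l) (hAl l).
pose D (S : list M -> Prop) := exists l0, forall l, S l <-> (forall x, In x l0 -> Al l x).
have [U [HU HD]] : exists U, isUF U /\ forall S, D S -> U S.
  apply: UFM.uf_exists.
  - by exists (fun l => forall x, In x nil -> Al l x), nil.
  - move=> S T [l0 H0] [l1 H1]; exists (fun l => forall x, In x (l0 ++ l1) -> Al l x); split.
    + by exists (l0 ++ l1).
    + move=> l Hl; rewrite H0 H1; split => x Hx; apply: Hl; apply/in_app_iff; by [left|right].
  - move=> S [l0 H0]; exists l0; apply/H0 => x Hx; by right.
have Ux : forall x, U (fun l => Al l x).
  move=> x; have HS := HD (fun l => forall x', In x' (x :: nil) -> Al l x') (ex_intro _ (x :: nil) (fun l => iff_refl _)).
  apply: (uM _ _ HU HS) => l Hl; apply: Hl; by left.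
pose dx x l : Ms l := match excluded_middle_informative (Al l x) with
                      | left h => exist _ x h
                      | right _ => exist _ x0 (or_introl erefl) end.
have Hdx : forall x l, Al l x -> proj1_sig (dx x l) = x.
  by move=> x l h; rewrite /dx; case: excluded_middle_informative.
pose UPM := UP _ U Ms.
pose d x : UPM := cls _ U Ms (fun l => dx x l).
have dinj : forall x y, d x = d y -> x = y.
  move=> x y /(cls_eq _ _ HU) E.
  have [l [Exy [Ax Ay]]] := uEx _ _ HU (uI _ _ HU E (uI _ _ HU (Ux x) (Ux y))).
  by rewrite -(Hdx _ _ Ax) -(Hdx _ _ Ay) Exy.
have dint : forall R a, interp M R a <-> interp UPM R (fun k => d (a k)).
  move=> R a.
  have Hall := fin_inter _ _ HU _ (fun k l => Al l (a k)) (fun k => Ux (a k)).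
  transitivity (U (fun l => interp M R (fun k => proj1_sig (dx (a k) l)))); last first.
    symmetry; exact (interp_cls _ _ HU Ms _ (fun k l => dx (a k) l) (fun l => interp (Ms l) R)).
  split => H.
  + apply: (uM _ _ HU Hall) => l Hl.
    by rewrite (functional_extensionality _ _ (fun k => Hdx _ _ (Hl k))).
  + have [l [Hl H']] := uEx _ _ HU (uI _ _ HU Hall H).
    by rewrite (functional_extensionality _ _ (fun k => Hdx _ _ (Hl k))) in H'.
pose B (u : UPM) := exists x, u = d x.
have hB : exists u, B u by exists (d x0), x0.
pose h x : submodel UPM B hB := exist _ (d x) (ex_intro _ x erefl).
have SubPhi : models (submodel UPM B hB) phi.
  apply: (models_iso _ _ h _ _ _ _ Mphi).
  - by move=> x y /(f_equal (@proj1_sig _ _)) /dinj.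
  - move=> [u [x Hx]]; exists x; apply: sig_eq => /=; by rewrite Hx.
  - move=> R a; exact: (dint R a).
have thUP : theta phi UPM by exists B, hB.
have := (Hchi UPM).1 thUP (fun n => cls _ U Ms (fun l => dx x0 l)).
move/(los _ _ HU Ms chi (fun l _ => dx x0 l)) => /(uEx _ _ HU) [l Hl].
have := models_of_sat _ _ _ Schi Hl => /(Hchi (Ms l)) th.
apply: (TM (length (x0 :: l))); apply: (theta_sub_card _ _ _ _ _ th).
exists (x0 :: l); split => // x [->|Hx]; by [left|right].
Qed.

Lemma bound phi : sentence phi ->
  (forall M : structure, model_of_T phi M -> ~ models M phi) ->
  exists N, 0 < N /\ forall M : structure, models M phi -> theta_le phi N M.
Proof.
move=> Sphi H; apply: NNPP => Hno.
have Hex : forall N, exists M : structure, models M phi /\ ~ theta_le phi N.+1 M.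
  move=> N; apply: NNPP => HN; apply: Hno; exists N.+1; split => // M HM.
  apply: NNPP => Ht; apply: HN; by exists M.
pose Ms N := proj1_sig (constructive_indefinite_description _ (Hex N)).
have HMs : forall N, models (Ms N) phi /\ ~ theta_le phi N.+1 (Ms N).
  by move=> N; rewrite /Ms; case: (constructive_indefinite_description _ _).
pose D (S : nat -> Prop) := exists n, forall i, S i <-> n <= i.
have [U [HU HD]] : exists U, isUF U /\ forall S, D S -> U S.
  apply: UFM.uf_exists.
  - by exists (fun i => 0 <= i), 0.
  - move=> S T [n Hn] [m Hm]; exists (fun i => maxn n m <= i); split; first by exists (maxn n m).
    move=> i Hi; rewrite Hn Hm; split; lia.
  - move=> S [n Hn]; exists n; exact/Hn.
have Un : forall n, U (fun i => n <= i) by move=> n; apply: HD; exists n.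
apply: (H (UP _ U Ms)).
- case => [|n] Hn.
  + case: Hn => A [[x Ax] [[l [Hl Hc]] _]]; have := Hc x Ax.
    by case: l Hl Hc.
  + have := (thetaF_sat (UP _ U Ms) n.+1 phi (fun _ => cls _ U Ms (fun i => pt (Ms i))) Sphi erefl).2 Hn.
    move/(los _ _ HU Ms _ (fun i _ => pt (Ms i))) => Hs.
    have [i [Hi Hni]] := uEx _ _ HU (uI _ _ HU Hs (Un n.+1)).
    have := (thetaF_sat (Ms i) n.+1 phi _ Sphi erefl).1 Hi => /(theta_le_mono _ _ i.+1) Ht.
    apply: (HMs i).2; apply: Ht; lia.
- move=> e; rewrite (env_cls _ _ _ e); apply/(los _ _ HU Ms phi (fun i n => rep _ U Ms (e n) i)).
  apply: (uM _ _ HU (uT _ _ HU)) => i _; exact: (HMs i).1.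
Qed.

End F.

Theorem theorem1 (Rel : Type) (ar : Rel -> nat) (phi : form ar)
  (hphi : sentence phi) :
  expressible (theta phi) <->
  exists psi : form ar, sentence psi /\ sigma02 psi /\
    forall M : structure ar, model_of_T phi M ->
      (models M phi <-> models M psi).
Proof.
split.
- move=> Hex; exists FFalse; split; first done.
  split; first by exists 0, 0, FFalse.
  move=> M TM; split => [Mphi | Mf].
  + exfalso; exact: (expr_noT _ _ _ hphi Hex M TM Mphi).
  + exfalso; exact: (Mf (fun _ => pt _ _ M)).
- move=> [psi [Spsi [Sg Hpsi]]].
  have noT := sigma_noT _ _ _ _ hphi Spsi Sg Hpsi.
  have [N [HN Hb]] := bound _ _ _ hphi noT.
  exists (thetaF _ _ N phi); split; first exact: thetaF_sentence.
  move=> M; split.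
  + move=> [A [hA HmA]] e; apply/(thetaF_sat _ _ M N phi e hphi HN).
    exact: (theta_le_sub _ _ _ _ _ A hA (Hb _ HmA)).
  + move=> H; have := (thetaF_sat _ _ M N phi (fun _ => pt _ _ M) hphi HN).1 (H _).
    move=> [A [hA [_ Hm]]]; by exists A, hA.
Qed.
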